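(* Define a sequence of permutations $(a_i)_{i\ge 1}$ as follows. Let $$a_1 = 13\;12\;10\;14\;8\;11\;6\;9\;4\;7\;3\;2\;1\;5,$$ a permutation of $\{1,\dots,14\}$ in one-line notation. Given $a_i$, a permutation of $\{1,\dots,n\}$ whose maximum entry is $m=n$, obtain $a_{i+1}$ by: increasing by $2$ every entry of $a_i$ that is weakly to the left of the position of $m$ (including $m$ itself), leaving all entries to the right of $m$ unchanged, and inserting immediately after the (now incremented) maximum entry two new consecutive entries with values $m-4$ and $m-1$, in this order. (For example, $a_2 = 15\;14\;12\;16\;10\;13\;8\;11\;6\;9\;4\;7\;3\;2\;1\;5$.) Then each $a_i$ is a permutation of $\{1,\dots,2i+12\}$, and for all $i\neq j$ the permutations $a_i$ and $a_j$ are incomparable in the pattern-containment order. Consequently, the partially ordered set of all finite permutations ordered by pattern containment contains an infinite antichain, namely $\{a_i : i\ge 1\}$.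
   Context: A permutation of $\{1,\dots,n\}$ is written in one-line notation as the sequence $p(1)\,p(2)\cdots p(n)$. For a permutation $p_1$ of $\{1,\dots,m\}$ and a permutation $p_2$ of $\{1,\dots,n\}$ with $m\le n$, we say $p_1 \le p_2$ ($p_1$ is contained in $p_2$) if one can delete $n-m$ entries from the sequence $p_2$ so that, after renaming the remaining $m$ entries by their relative rank (the smallest becomes $1$, the next $2$, etc.), one obtains exactly $p_1$; equivalently, there are positions $k_1<\dots<k_m$ with $p_2(k_s)<p_2(k_t)$ if and only if $p_1(s)<p_1(t)$. This makes the set of all finite permutations a partially ordered set. An antichain is a set of pairwise incomparable elements. *)

(* Defs.v *)
From mathcomp Require Import all_boot.
Set Implicit Arguments. Unset Strict Implicit. Unset Printing Implicit Defensive.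

(* Permutations are represented in one-line notation as sequences of nats. *)

Definition perm_contained (p q : seq nat) : Prop :=
  exists msk : bitseq,
    size msk = size q /\
    let s := mask msk q in
    size s = size p /\
    forall x y, x < size p -> y < size p ->
      (nth 0 s x < nth 0 s y) = (nth 0 p x < nth 0 p y).

Definition incomparable (p q : seq nat) : Prop :=
  ~ perm_contained p q /\ ~ perm_contained q p.

Definition a1 : seq nat := [:: 13; 12; 10; 14; 8; 11; 6; 9; 4; 7; 3; 2; 1; 5].

Definition step (s : seq nat) : seq nat :=
  let m := foldr maxn 0 s in
  let k := index m s in
  map (addn 2) (take k.+1 s) ++ [:: m - 4; m - 1] ++ drop k.+1 s.

(* a i for i >= 1; a 1 = a1, a (i+1) = step (a i). *)
Definition a (i : nat) : seq nat := iter i.-1 step a1.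

(* Main.v *)
Require Import Defs.
From mathcomp Require Import all_boot zify.

Definition A (n p : nat) : nat :=
  if p == 0 then n - 1 else if p == 1 then n - 2 else if p == 2 then n - 4
  else if p == 3 then n else if p < n - 4 then (if odd p then n + 2 - p else n - 2 - p)
  else if p == n - 4 then 3 else if p == n - 3 then 2 else if p == n - 2 then 1 else 5.

Definition h (n p : nat) : nat :=
  if p <= 1 then 0 else if p < n - 4 then (if odd p then p - 2 else p)
  else if p == n - 1 then n - 5 else n - 4.




Lemma A_spec n p : 14 <= n ->
  (p = 0 /\ A n p = n - 1) \/ (p = 1 /\ A n p = n - 2) \/ (p = 2 /\ A n p = n - 4) \/
  (p = 3 /\ A n p = n) \/ (4 <= p < n - 4 /\ (exists t, p = 2 * t + 1) /\ A n p = n + 2 - p) \/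
  (4 <= p < n - 4 /\ (exists t, p = 2 * t) /\ A n p = n - 2 - p) \/
  (p = n - 4 /\ A n p = 3) \/ (p = n - 3 /\ A n p = 2) \/ (p = n - 2 /\ A n p = 1) \/
  (n - 1 <= p /\ A n p = 5).
Proof.
move=> hn; rewrite /A.
case: eqP => [->|h0]; first lia.
case: eqP => [->|h1]; first lia.
case: eqP => [->|h2]; first lia.
case: eqP => [->|h3]; first lia.
case: ifP => [hm|/negbT hm].
  have := divn_eq p 2; rewrite modn2; case: (odd p) => /= hp; [do 4 right; left|do 5 right; left]; (split; [lia|split; [exists (p %/ 2)|]]); lia.
case: eqP => [->|h4]; first lia.
case: eqP => [->|h5]; first lia.
case: eqP => [->|h6]; lia.
Qed.

Lemma h_spec n p : 14 <= n ->
  (p <= 1 /\ h n p = 0) \/ (2 <= p < n - 4 /\ (exists t, p = 2 * t + 1) /\ h n p = p - 2) \/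
  (2 <= p < n - 4 /\ (exists t, p = 2 * t) /\ h n p = p) \/ (p = n - 1 /\ h n p = n - 5) \/
  (n - 4 <= p /\ p <> n - 1 /\ h n p = n - 4).
Proof.
move=> hn; rewrite /h.
case: ifP => [h0|/negbT h0]; first lia.
case: ifP => [hm|/negbT hm].
  have := divn_eq p 2; rewrite modn2; case: (odd p) => /= hp; [do 1 right; left|do 2 right; left]; (split; [lia|split; [exists (p %/ 2)|]]); lia.
case: eqP => [->|h4]; lia.
Qed.

Lemma Ah_spec n p : 14 <= n -> p < n ->
  (p = 0 /\ A n p = n - 1 /\ h n p = 0) \/ (p = 1 /\ A n p = n - 2 /\ h n p = 0) \/
  (p = 2 /\ A n p = n - 4 /\ h n p = 2) \/
  (p = 3 /\ A n p = n /\ h n p = 1) \/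
  (4 <= p < n - 4 /\ (exists t, p = 2 * t + 1) /\ A n p = n + 2 - p /\ h n p = p - 2) \/
  (4 <= p < n - 4 /\ (exists t, p = 2 * t) /\ A n p = n - 2 - p /\ h n p = p) \/
  (p = n - 4 /\ A n p = 3 /\ h n p = n - 4) \/ (p = n - 3 /\ A n p = 2 /\ h n p = n - 4) \/
  (p = n - 2 /\ A n p = 1 /\ h n p = n - 4) \/
  (p = n - 1 /\ A n p = 5 /\ h n p = n - 5).
Proof.
move=> hn hp.
have := A_spec n p hn; have := h_spec n p hn.
intros; repeat match goal with H: _ \/ _ |- _ => destruct H | H : _ /\ _ |- _ => destruct H | H : exists _, _ |- _ => destruct H end;
 try (exfalso; lia).
all: first [ left; lia | do 1 right; left; lia | do 2 right; left; lia | do 3 right; left; lia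
 | do 6 right; left; lia | do 7 right; left; lia | do 8 right; left; lia | do 9 right; lia | idtac].
all: try (do 4 right; left; split; [lia|split; [eauto|lia]]).
all: try (do 5 right; left; split; [lia|split; [eauto|lia]]).
Qed.

Ltac spl := intros; repeat match goal with H: _ \/ _ |- _ => destruct H | H : exists _, _ |- _ => destruct H | H : _ /\ _ |- _ => destruct H end.

Lemma edge_h M p q : 14 <= M -> M %% 2 = 0 -> p < q -> q < M -> A M p < A M q ->
  h M q <= h M p + 1 /\ h M p <= h M q + 1.
Proof.
move=> hM hp pq qM lt.
have [m hm] : exists m, M = 2 * m by exists (M %/ 2); have := divn_eq M 2; lia.
have := Ah_spec M p hM (ltn_trans pq qM); have := Ah_spec M q hM qM.
(spl; lia).
Qed.

Lemma l3a M p q : 14 <= M -> M %% 2 = 0 -> p < q -> q < M -> A M p < A M q ->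
  q <> 3 -> q <> M - 1 ->
  p = q - 1 \/ (p = q - 3 /\ q <> M - 2) \/ (p = q - 2 /\ q = M - 2).
Proof.
move=> hM hp pq qM lt.
have [m hm] : exists m, M = 2 * m by exists (M %/ 2); have := divn_eq M 2; lia.
have := Ah_spec M p hM (ltn_trans pq qM); have := Ah_spec M q hM qM.
(spl; lia).
Qed.

Lemma emb p q : perm_contained p q -> exists e : nat -> nat,
  (forall x, x < size p -> e x < size q) /\
  (forall x y, x < y -> y < size p -> e x < e y) /\
  (forall x y, x < size p -> y < size p ->
     (nth 0 q (e x) < nth 0 q (e y)) = (nth 0 p x < nth 0 p y)).
Proof.
case=> m [Hm [Hs Hord]].
set ix := mask m (iota 0 (size q)).
have Hq : q = map (nth 0 q) (iota 0 (size q)) by rewrite -/(mkseq _ _) mkseq_nth.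
have Hmq : mask m q = map (nth 0 q) ix by rewrite /ix map_mask -Hq.
have Hsz : size ix = size p by rewrite -Hs Hmq size_map.
have Hsort : sorted ltn ix by apply: sorted_mask; [exact: ltn_trans | exact: iota_ltn_sorted].
exists (nth 0 ix); split; [|split].
- move=> x hx.
  have : nth 0 ix x \in iota 0 (size q) by apply: (mem_mask (m := m)); rewrite mem_nth // Hsz.
  by rewrite mem_iota.
- move=> x y xy hy.
  apply: (sorted_ltn_nth ltn_trans 0 Hsort) => //; rewrite inE Hsz //.
  exact: ltn_trans xy hy.
- move=> x y hx hy; rewrite -Hord // Hmq !(nth_map 0) // Hsz //.
Qed.

Lemma size_nc p q : size q < size p -> ~ perm_contained p q.
Proof.
move=> hs [m [Hm [Hs _]]].
move: Hs; rewrite size_mask // => Hs.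
have := count_size id m; lia.
Qed.

Lemma mkseq_split (f : nat -> nat) k m :
  mkseq f (k + m) = mkseq f k ++ mkseq (fun p => f (p + k)) m.
Proof.
rewrite /mkseq iotaD map_cat; congr (_ ++ _).
rewrite -[k in iota k _]addn0 iotaDl -map_comp; apply: eq_map => x /=; by rewrite addnC.
Qed.

Lemma foldr_max_le s m : (forall x, x \in s -> x <= m) -> foldr maxn 0 s <= m.
Proof.
elim: s => [//|y s IH] hle /=; rewrite geq_max; apply/andP; split.
  by apply: hle; rewrite inE eqxx.
by apply: IH => x hx; apply: hle; rewrite inE hx orbT.
Qed.

Lemma foldr_max_ge s x : x \in s -> x <= foldr maxn 0 s.
Proof.
elim: s => [//|y s IH]; rewrite inE => /orP [/eqP ->|hx] /=; rewrite leq_max ?leqnn //.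
by rewrite IH ?orbT.
Qed.

Lemma foldr_max s m : (forall x, x \in s -> x <= m) -> m \in s -> foldr maxn 0 s = m.
Proof.
move=> h1 h2; apply/eqP; rewrite eqn_leq foldr_max_le //; exact: foldr_max_ge.
Qed.

Lemma A_le n p : 14 <= n -> p < n -> A n p <= n.
Proof. move=> hn hp; have := A_spec n p hn; spl; lia. Qed.

Lemma step_A n : 14 <= n -> step (mkseq (A n) n) = mkseq (A n.+2) n.+2.
Proof.
move=> hn.
have Hs : mkseq (A n) n = [:: n - 1; n - 2; n - 4; n] ++ mkseq (fun p => A n (p + 4)) (n - 4).
  have e : n = 4 + (n - 4) by lia.
  by rewrite {2}e mkseq_split.
have Hs2 : mkseq (A n.+2) n.+2 = [:: n.+1; n; n - 2; n.+2; n - 4; n - 1] ++ mkseq (fun p => A n (p + 4)) (n - 4).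
  have e : n.+2 = 6 + (n - 4) by lia.
  rewrite {2}e mkseq_split; congr (_ ++ _).
    rewrite /mkseq /= /A /=.
    have -> : (4 < n.+2 - 4) by lia.
    have -> : (5 < n.+2 - 4) by lia.
    rewrite /=; congr [:: _; _; _; _; _; _]; lia.
  apply: eq_mkseq => p /=.
  rewrite /A /=.
  have -> : (p + 6 == 0) = false by lia.
  have -> : (p + 6 == 1) = false by lia.
  have -> : (p + 6 == 2) = false by lia.
  have -> : (p + 6 == 3) = false by lia.
  have -> : (p + 4 == 0) = false by lia.
  have -> : (p + 4 == 1) = false by lia.
  have -> : (p + 4 == 2) = false by lia.
  have -> : (p + 4 == 3) = false by lia.
  have -> : (p + 6 < n.+2 - 4) = (p + 4 < n - 4) by lia.
  have -> : (p + 6 == n.+2 - 4) = (p + 4 == n - 4) by lia.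
  have -> : (p + 6 == n.+2 - 3) = (p + 4 == n - 3) by lia.
  have -> : (p + 6 == n.+2 - 2) = (p + 4 == n - 2) by lia.
  have -> : odd (p + 6) = odd (p + 4) by rewrite !oddD.
  case: ifP => // _; case: ifP => _; lia.
rewrite /step Hs Hs2.
have -> : foldr maxn 0 ([:: n - 1; n - 2; n - 4; n] ++ mkseq (fun p => A n (p + 4)) (n - 4)) = n.
  rewrite -Hs; apply: foldr_max.
    move=> x /mapP [p]; rewrite mem_iota => /andP [_ hp] ->; apply: A_le => //.
  apply/mapP; exists 3; rewrite ?mem_iota //; lia.
have -> : index n ([:: n - 1; n - 2; n - 4; n] ++ mkseq (fun p => A n (p + 4)) (n - 4)) = 3.
  rewrite /= .
  have -> : (n - 1 == n) = false by lia.
  have -> : (n - 2 == n) = false by lia.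
  have -> : (n - 4 == n) = false by lia.
  by rewrite eqxx.
rewrite /= take0 drop0 /=.
have -> : 2 + (n - 1) = n.+1 by lia.
have -> : 2 + (n - 2) = n by lia.
have -> : 2 + (n - 4) = n - 2 by lia.
by [].
Qed.

Lemma a_formula k : a k.+1 = mkseq (A (2 * k + 14)) (2 * k + 14).
Proof.
elim: k => [|k IH]; first by [].
rewrite /a /= -/(iter k step a1) -[iter k step a1]/(a k.+1) IH step_A; last by lia.
by have -> : (2 * k + 14).+2 = 2 * k.+1 + 14 by lia.
Qed.

Lemma perm_A n : 14 <= n -> n %% 2 = 0 -> perm_eq (mkseq (A n) n) (iota 1 n).
Proof.
move=> hn hp.
have [m hm] : exists m, n = 2 * m by exists (n %/ 2); have := divn_eq n 2; lia.
have U : uniq (mkseq (A n) n).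
  rewrite /mkseq map_inj_in_uniq ?iota_uniq // => x y; rewrite !mem_iota => /andP [_ hx] /andP [_ hy] e.
  have := Ah_spec n x hn hx; have := Ah_spec n y hn hy; spl; lia.
have S : {subset mkseq (A n) n <= iota 1 n}.
  move=> x /mapP [p]; rewrite !mem_iota => /andP [_ hx] ->.
  have := Ah_spec n p hn hx; spl; lia.
have sz : size (iota 1 n) <= size (mkseq (A n) n) by rewrite size_iota size_mkseq.
have [_ E] := uniq_min_size U S sz.
by apply: uniq_perm => //; exact: iota_uniq.
Qed.

Lemma sp_edge N v : 14 <= N -> N %% 2 = 0 -> 1 <= v -> v + 1 <= N - 6 ->
  (odd v -> A N (v + 1) < A N (v + 2)) /\ (~~ odd v -> A N v < A N (v + 3)).
Proof.
move=> hN pN h1 h2.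
have [n2 hn2] : exists m, N = 2 * m by exists (N %/ 2); have := divn_eq N 2; lia.
have := divn_eq v 2; rewrite modn2; case: (odd v) => /= hv; split=> // _.
- have := Ah_spec N (v + 1) hN ltac:(lia); have := Ah_spec N (v + 2) hN ltac:(lia); spl; lia.
- have := Ah_spec N v hN ltac:(lia); have := Ah_spec N (v + 3) hN ltac:(lia); spl; lia.
Qed.

Lemma main_nc N M : 14 <= N -> N < M -> N %% 2 = 0 -> M %% 2 = 0 ->
  ~ perm_contained (mkseq (A N) N) (mkseq (A M) M).
Proof.
move=> hN hNM pN pM /emb [e [Hr [Hmono Hord]]].
rewrite !size_mkseq in Hr Hmono Hord.
have hM : 14 <= M by lia.
have [n2 hn2] : exists m, N = 2 * m by exists (N %/ 2); have := divn_eq N 2; lia.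
have HA : forall x y, x < N -> y < N -> A N x < A N y -> A M (e x) < A M (e y).
  move=> x y hx hy h; have hex := Hr x hx; have hey := Hr y hy.
  by have := Hord x y hx hy; rewrite !nth_mkseq // h.
have l3 : forall p1 p2 p3 q, p1 < p2 -> p2 < p3 -> p3 < q -> q < M ->
    A M p1 < A M q -> A M p2 < A M q -> A M p3 < A M q -> q = 3 \/ q = M - 1.
  move=> p1 p2 p3 q h12 h23 h3q hqM a1q a2q a3q.
  case: (q =P 3) => [->|q3]; first by left.
  case: (q =P M - 1) => [->|qM1]; first by right.
  have := l3a M p1 q hM pM (ltn_trans h12 (ltn_trans h23 h3q)) hqM a1q q3 qM1.
  have := l3a M p2 q hM pM (ltn_trans h23 h3q) hqM a2q q3 qM1.
  have := l3a M p3 q hM pM h3q hqM a3q q3 qM1.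
  lia.
have A0 : A N 0 = N - 1 by [].
have A1 : A N 1 = N - 2 by [].
have A2 : A N 2 = N - 4 by [].
have A3 : A N 3 = N by [].
have A6 : A N (N - 6) = 4 by have := Ah_spec N (N - 6) hN ltac:(lia); spl; lia.
have A4 : A N (N - 4) = 3 by have := Ah_spec N (N - 4) hN ltac:(lia); spl; lia.
have A5 : A N (N - 3) = 2 by have := Ah_spec N (N - 3) hN ltac:(lia); spl; lia.
have A7 : A N (N - 2) = 1 by have := Ah_spec N (N - 2) hN ltac:(lia); spl; lia.
have A8 : A N (N - 1) = 5 by have := Ah_spec N (N - 1) hN ltac:(lia); spl; lia.
have E3 : e 3 = 3 \/ e 3 = M - 1.
  apply: (l3 (e 0) (e 1) (e 2)); try (apply: Hmono; lia); try (apply: Hr; lia);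
  apply: HA; lia.
have EL : e (N - 1) = 3 \/ e (N - 1) = M - 1.
  apply: (l3 (e (N - 4)) (e (N - 3)) (e (N - 2))); try (apply: Hmono; lia); try (apply: Hr; lia);
  apply: HA; lia.
have lt3L : e 3 < e (N - 1) by apply: Hmono; lia.
have ltLM : e (N - 1) < M by apply: Hr; lia.
have e3 : e 3 = 3 by lia.
have eL : e (N - 1) = M - 1 by lia.
have hM3 : h M 3 = 1 by have := Ah_spec M 3 hM ltac:(lia); spl; lia.
have hML : h M (M - 1) = M - 5 by have := Ah_spec M (M - 1) hM ltac:(lia); spl; lia.
have Hind : forall v, 1 <= v -> v <= N - 6 -> h M (e (if odd v then v + 2 else v)) <= v.
  elim=> [//|v IH] h1 hv.
  case: (v =P 0) => [->|v0]; first by rewrite /= e3 hM3.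
  have {}IH := IH ltac:(lia) ltac:(lia).
  have [Eo Ee] := sp_edge N v hN pN ltac:(lia) ltac:(lia).
  rewrite oddS; case: (boolP (odd v)) => ov /=.
  - rewrite ov in IH.
    have hA := HA (v + 1) (v + 2) ltac:(lia) ltac:(lia) (Eo ov).
    have hlt := Hmono (v + 1) (v + 2) ltac:(lia) ltac:(lia).
    have := edge_h M (e (v + 1)) (e (v + 2)) hM pM hlt (Hr (v + 2) ltac:(lia)) hA.
    rewrite -[v.+1]addn1; lia.
  - rewrite (negbTE ov) in IH.
    have hA := HA v (v + 3) ltac:(lia) ltac:(lia) (Ee ov).
    have hlt := Hmono v (v + 3) ltac:(lia) ltac:(lia).
    have := edge_h M (e v) (e (v + 3)) hM pM hlt (Hr (v + 3) ltac:(lia)) hA.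
    rewrite (_ : v.+1 + 2 = v + 3); last by lia.
    lia.
have := Hind (N - 6) ltac:(lia) ltac:(lia).
have -> : odd (N - 6) = false.
  by rewrite hn2 (_ : 2 * n2 - 6 = 2 * (n2 - 3)); [rewrite oddM | lia].
move=> hfin.
have hA := HA (N - 6) (N - 1) ltac:(lia) ltac:(lia) ltac:(lia).
have hlt := Hmono (N - 6) (N - 1) ltac:(lia) ltac:(lia).
have := edge_h M (e (N - 6)) (e (N - 1)) hM pM hlt ltLM hA.
rewrite eL hML; lia.
Qed.

Theorem mainTheorem1 :
  (forall i, 1 <= i -> perm_eq (a i) (iota 1 (2 * i + 12))) /\
  (forall i j, 1 <= i -> 1 <= j -> i <> j -> incomparable (a i) (a j)) /\
  (* consequently {a_i : i >= 1} is an infinite antichain *)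
  (forall i j, 1 <= i -> 1 <= j -> a i = a j -> i = j).
Proof.
split; [|split].
- move=> [//|k] _; rewrite a_formula (_ : 2 * k.+1 + 12 = 2 * k + 14); last by lia.
  apply: perm_A; lia.
- move=> [//|i] [//|j] _ _ ne; rewrite !a_formula.
  case: (ltngtP i j) => h.
  + split; first by apply: main_nc; lia.
    by apply: size_nc; rewrite !size_mkseq; lia.
  + split; last by apply: main_nc; lia.
    by apply: size_nc; rewrite !size_mkseq; lia.
  + by move: ne; rewrite h.
- move=> [//|i] [//|j] _ _; rewrite !a_formula => /(congr1 size); rewrite !size_mkseq => h; lia.
Qed.
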